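(* Let $n,k$ be integers with $1\le k<n$, let $F$ be a finite field with $|F|\ge 2n$, and let $\{\lambda_{i,j}: i\in[n],\ j\in\{0,1\}\}$ be $2n$ distinct elements of $F$. Let $\mathcal{C}$ be the set of all tuples $C=(C_1,\dots,C_n)$ with $C_i=(c_{i,b,a}: b\in\{1,2,3\},\ a\in\{0,1,\dots,2^n-1\})\in F^{3\cdot 2^n}$ satisfying $$\sum_{i=1}^n \lambda_{i,a_i}^t\, c_{i,b,a}=0\quad\text{for all } t\in\{0,1,\dots,n-k-1\},\ b\in\{1,2,3\},\ a\in\{0,1,\dots,2^n-1\},$$ where $(a_1,\dots,a_n)\in\{0,1\}^n$ is the $n$-digit binary expansion of $a$. Then $\mathcal{C}$ is an $(n,k,l=3\cdot 2^n)$ MDS array code which is a $(2,k+1)$-MSR code under the cooperative model, i.e. for every $\mathcal{F}\subseteq[n]$ with $|\mathcal{F}|=2$ and every $\mathcal{R}\subseteq[n]\setminus\mathcal{F}$ with $|\mathcal{R}|=k+1$, the nodes $\{C_i:i\in\mathcal{F}\}$ can be cooperatively repaired from $\{C_j: j\in\mathcal{R}\}$ with total bandwidth $\frac{2(k+2)l}{3}=2(k+2)2^n$ symbols of $F$.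
   Context: $[n]=\{1,\dots,n\}$. An $(n,k,l)$ MDS array code over $F$ is a set of codewords $C=(C_1,\dots,C_n)$ with each node $C_i\in F^l$, forming an $F$-linear code of dimension $kl$, such that the contents of any $k$ nodes determine the whole codeword. Cooperative repair model: given a set $\mathcal{F}$ of failed nodes and a disjoint set $\mathcal{R}$ of helper nodes, each failed node downloads symbols of $F$ computed from the contents of the helper nodes, and the failed nodes may additionally exchange symbols of $F$ computed from the data they hold (their downloaded data) with each other; at the end each failed node $C_i$, $i\in\mathcal{F}$, must be able to recover its full content. $N_{\mathrm{co}}(\mathcal{C},\mathcal{F},\mathcal{R})$ is the minimum, over such schemes, of the total number of symbols of $F$ transmitted between any two distinct nodes (helper-to-failed and failed-to-failed). A code $\mathcal{C}$ is an $(h,d)$-MSR code under the cooperative model if it is an MDS array code and for all $\mathcal{F}\subseteq[n]$, $|\mathcal{F}|=h$, and $\mathcal{R}\subseteq[n]\setminus\mathcal{F}$, $|\mathcal{R}|=d$, one has $N_{\mathrm{co}}(\mathcal{C},\mathcal{F},\mathcal{R})=\frac{h(d+h-1)l}{h+d-k}$ (this value is a known lower bound for any MDS array code). *)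

(* Defs.v *)
From HB Require Import structures.
From mathcomp Require Import all_boot all_order all_algebra.
Set Implicit Arguments. Unset Strict Implicit. Unset Printing Implicit Defensive.
Import GRing.Theory.
Local Open Scope ring_scope.

(* A codeword of an (n,k,l) array code over F is an n x l matrix:
   row i (i : 'I_n) is the content C_{i+1} in F^l of node i+1.
   A code is a predicate (set) of such matrices. *)

Section ArrayCodes.
Variable F : fieldType.

Definition linear_code_of_dim (n l d : nat) (C : pred 'M[F]_(n, l)) : Prop :=
  exists V : {vspace 'M[F]_(n, l)}, (forall c, (c \in V) = C c) /\ \dim V = d.

Definition MDS_array_code (n k l : nat) (C : pred 'M[F]_(n, l)) : Prop :=
  linear_code_of_dim (k * l) C /\
  forall S : {set 'I_n}, #|S| = k ->
    forall c c' : 'M[F]_(n, l), C c -> C c' ->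
      (forall i, i \in S -> row i c = row i c') -> c = c'.

(* Cooperative repair scheme (arbitrary, not necessarily linear, functions).
   - dl j i : the symbols helper j sends to failed node i, a function of the
     content of node j, of fixed length dl_size j i;
   - ex i' i : the symbols failed node i' sends to failed node i, a function
     of the data downloaded by i' (indexed by helper), of fixed length
     ex_size i' i;
   - rec i : the recovery map of failed node i, from its downloaded data and
     the data received from the other failed nodes. *)
Record coop_scheme (n l : nat) := CoopScheme {
  dl_size : 'I_n -> 'I_n -> nat;
  dl : 'I_n -> 'I_n -> 'rV[F]_l -> seq F;
  ex_size : 'I_n -> 'I_n -> nat;
  ex : 'I_n -> 'I_n -> ('I_n -> seq F) -> seq F;
  rec : 'I_n -> ('I_n -> seq F) -> ('I_n -> seq F) -> 'rV[F]_l
}.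

Variables (n l : nat).
Implicit Types (S : coop_scheme n l) (Fs Rs : {set 'I_n}).

Definition downloaded S Rs (c : 'M[F]_(n, l)) (i : 'I_n) : 'I_n -> seq F :=
  fun j => if j \in Rs then dl S j i (row j c) else [::].

Definition received S Fs Rs (c : 'M[F]_(n, l)) (i : 'I_n) : 'I_n -> seq F :=
  fun i' => if (i' \in Fs) && (i' != i)
            then ex S i' i (downloaded S Rs c i') else [::].

Definition valid_coop_scheme (C : pred 'M[F]_(n, l)) Fs Rs S : Prop :=
  (forall i j x, size (dl S j i x) = dl_size S j i) /\
  (forall i' i D, size (ex S i' i D) = ex_size S i' i) /\
  (forall c, C c -> forall i, i \in Fs ->
     rec S i (downloaded S Rs c i) (received S Fs Rs c i) = row i c).

Definition coop_bandwidth Fs Rs S : nat :=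
  (\sum_(i in Fs) \sum_(j in Rs) dl_size S j i
   + \sum_(i in Fs) \sum_(i' in Fs | i' != i) ex_size S i' i)%N.

Definition is_N_co (C : pred 'M[F]_(n, l)) Fs Rs (N : nat) : Prop :=
  (exists S, valid_coop_scheme C Fs Rs S /\ coop_bandwidth Fs Rs S = N) /\
  (forall S, valid_coop_scheme C Fs Rs S -> (N <= coop_bandwidth Fs Rs S)%N).

(* (h,d)-MSR code under the cooperative model:
   N_co = h(d+h-1)l/(h+d-k), written without division. *)
Definition coop_MSR (k h d : nat) (C : pred 'M[F]_(n, l)) : Prop :=
  MDS_array_code k C /\
  forall Fs Rs : {set 'I_n}, #|Fs| = h -> [disjoint Fs & Rs] -> #|Rs| = d ->
    exists N, is_N_co C Fs Rs N /\ (N * (h + d - k) = h * (d + h - 1) * l)%N.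

End ArrayCodes.

(* binary digit i (0-indexed, least significant first) of a:
   a = \sum_(i < n) bit i a * 2^i for a < 2^n *)
Definition bit (i a : nat) : bool := odd (a %/ 2 ^ i).

(* A coordinate j : 'I_(3*2^n)
   of a node encodes the pair (b, a) with b = j %/ 2^n (in {0,1,2}, standing
   for {1,2,3}) and a = j %% 2^n; the constraint does not depend on b.
   Node i (0-indexed) uses the digit a_{i+1} = bit i a and
   lam i false / lam i true stand for lambda_{i+1,0} / lambda_{i+1,1}. *)
Definition coop_code (F : fieldType) (n k : nat) (lam : 'I_n -> bool -> F)
  : pred 'M[F]_(n, 3 * 2 ^ n) :=
  fun c => [forall t : 'I_(n - k), forall j : 'I_(3 * 2 ^ n),
              \sum_(i < n) (lam i (bit i (j %% 2 ^ n))) ^+ t * c i j == 0].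

(* Main.v *)
Require Import Defs.
From HB Require Import structures.
From mathcomp Require Import all_boot all_order all_algebra.
From mathcomp Require Import zify ring.
From Stdlib Require Import FunctionalExtensionality.
Set Implicit Arguments. Unset Strict Implicit. Unset Printing Implicit Defensive.
Import GRing.Theory.

Local Open Scope ring_scope.

Lemma lagrange_zero (F : fieldType) (I : finType) (z w : I -> F) (J : {set I}) (r : nat) :
  injective z -> (forall p, p \notin J -> w p = 0) -> (#|J| <= r)%N ->
  (forall t, (t < r)%N -> \sum_p z p ^+ t * w p = 0) -> forall p, w p = 0.
Proof.
move=> zi w0 cJ hs p0; case: (boolP (p0 \in J)) => Hp0; last exact: w0.
pose P := \prod_(q <- enum (J :\ p0)) ('X - (z q)%:P).
have sP : (size P <= r)%N.
  rewrite size_prod_XsubC -cardE; move: cJ; rewrite (cardsD1 p0 J) Hp0 //.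
have key : \sum_p P.[z p] * w p = 0.
  under eq_bigr do rewrite horner_coef mulr_suml.
  rewrite exchange_big /=; apply: big1 => t _.
  transitivity (P`_t * \sum_p z p ^+ t * w p); last first.
    by rewrite hs ?mulr0 //; exact: leq_trans (ltn_ord t) sP.
  by rewrite mulr_sumr; apply: eq_bigr => p _; rewrite mulrA.
move: key; rewrite (bigD1 p0) //= big1 ?addr0.
  move/eqP; rewrite mulf_eq0 => /orP [|/eqP //].
  rewrite horner_prod prodf_seq_eq0 => /hasP [q].
  rewrite mem_enum in_setD1 => /andP [qp _]; rewrite /= hornerXsubC subr_eq0 => /eqP /zi.
  by move=> e; rewrite e eqxx in qp.
move=> q qp0; case: (boolP (q \in J)) => qJ; last by rewrite w0 // mulr0.
have : root P (z q) by rewrite /P -(big_map z xpredT (fun a => 'X - a%:P)) root_prod_XsubC; apply: map_f; rewrite mem_enum in_setD1 qp0.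
by move/eqP ->; rewrite mul0r.
Qed.

Lemma vander_exists (F : finFieldType) (m : nat) (z : 'I_m -> F) :
  injective z -> forall y : nat -> F, exists w : 'I_m -> F,
  forall t, (t < m)%N -> \sum_s z s ^+ t * w s = y t.
Proof.
move=> zi y.
pose f (w : {ffun 'I_m -> F}) : {ffun 'I_m -> F} := [ffun t : 'I_m => \sum_s z s ^+ t * w s].
have finj : injective f.
  move=> w1 w2 e; apply/ffunP => s; apply/eqP; rewrite -subr_eq0; apply/eqP.
  apply: (@lagrange_zero F _ z (fun s => w1 s - w2 s) setT m zi) => //.
    by move=> p; rewrite in_setT.
    by rewrite cardsT card_ord.
  move=> t ht; have := congr1 (fun g : {ffun 'I_m -> F} => g (Ordinal ht)) e.
  rewrite !ffunE /= => e'.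
  under eq_bigr do rewrite mulrBr.
  by rewrite sumrB e' subrr.
have := inj_card_onto finj (leqnn _) [ffun t : 'I_m => y t].
case/codomP => w ew; exists w => t ht.
have := congr1 (fun g : {ffun 'I_m -> F} => g (Ordinal ht)) ew.
by rewrite !ffunE.
Qed.

Lemma vander_exists_set (F : finFieldType) (n : nat) (z : 'I_n -> F) (J : {set 'I_n}) :
  injective z -> forall y : nat -> F, exists w : 'I_n -> F,
  (forall i, i \notin J -> w i = 0) /\
  forall t, (t < #|J|)%N -> \sum_i z i ^+ t * w i = y t.
Proof.
move=> zi y.
have zi' : injective (fun s : 'I_#|J| => z (enum_val s)).
  by move=> s1 s2 /zi /enum_val_inj.
have [w' hw'] := vander_exists zi' y.
exists (fun i => \sum_s (enum_val s == i)%:R * w' s); split.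
  move=> i iJ; apply: big1 => s _.
  case: eqP => [e|]; last by rewrite mul0r.
  by move: iJ; rewrite -e enum_valP.
move=> t ht; rewrite -(hw' t ht).
under eq_bigr do rewrite mulr_sumr.
rewrite exchange_big /=; apply: eq_bigr => s _.
rewrite (bigD1 (enum_val s)) //= eqxx mul1r big1 ?addr0 // => i ni.
by rewrite eq_sym (negbTE ni) mul0r mulr0.
Qed.

Local Close Scope ring_scope.


Lemma divD2 a w : ((a + 2 ^ w) %/ 2 ^ w = a %/ 2 ^ w + 1)%N.
Proof. by rewrite -{1}(mul1n (2 ^ w)) divnDMl // expn_gt0. Qed.

Lemma bitD w a i : bit w a = false -> bit i (a + 2 ^ w) = (i == w) || bit i a.
Proof.
rewrite /bit => hw; case: (ltngtP i w) => [iw|wi|->]; last by rewrite divD2 addn1 /= hw.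
- have e : (2 ^ w = 2 ^ (w - i) * 2 ^ i)%N by rewrite -expnD subnK // ltnW.
  rewrite e divnDMl ?expn_gt0 // oddD oddX /=.
  have -> : (w - i == 0)%N = false by apply/negbTE; rewrite subn_eq0 -ltnNge.
  by rewrite addbF.
- have e : (2 ^ i = 2 ^ w * 2 ^ (i - w))%N by rewrite -expnD subnKC // ltnW.
  rewrite e !divnMA divD2.
  move: hw; set q := (a %/ 2 ^ w)%N => hw.
  have eqq : q = (q %/ 2 * 2)%N by rewrite {1}(divn_eq q 2) modn2 hw addn0.
  have [s es] : exists s, (i - w = s.+1)%N by exists (i - w).-1; rewrite prednK // subn_gt0.
  by rewrite es expnS !divnMA {1}eqq divnMDl // (@divn_small 1 2) // addn0.
Qed.

Lemma bitB w a i : bit w a -> (2 ^ w <= a)%N /\ bit i (a - 2 ^ w) = (i != w) && bit i a.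
Proof.
move=> hw.
have h : (2 ^ w <= a)%N.
  rewrite leqNgt; apply/negP => lt; move: hw; rewrite /bit divn_small //.
split => //.
have hw' : bit w (a - 2 ^ w) = false.
  move: hw; rewrite /bit -{1}(subnK h) divD2 addn1 /=.
  by case: (odd _).
have := bitD i hw'; rewrite subnK // => ->.
case: eqP => [->|_] //=.
Qed.

Lemma bitD_lt n w a : (w < n)%N -> (a < 2 ^ n)%N -> bit w a = false -> (a + 2 ^ w < 2 ^ n)%N.
Proof.
move=> wn an hw.
have e : (2 ^ n = 2 ^ (n - w) * 2 ^ w)%N by rewrite -expnD subnK // ltnW.
rewrite e -ltn_divLR ?expn_gt0 // divD2.
move: an; rewrite e -ltn_divLR ?expn_gt0 //.
move: hw; rewrite /bit; set q := (a %/ 2 ^ w)%N => hw.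
set E := (2 ^ (n - w))%N.
have oE : odd E = false by rewrite /E oddX subn_eq0 leqNgt wn.
rewrite addn1 leq_eqVlt => /orP [/eqP e'|//].
by move: oE; rewrite -e' /= hw.
Qed.

Local Open Scope ring_scope.

Section Code.
Variables (F : finFieldType) (n k : nat) (lam : 'I_n -> bool -> F).
Hypothesis lam_inj : injective (fun p : 'I_n * bool => lam p.1 p.2).
Hypothesis hkn : (k < n)%N.
Local Notation l := (3 * 2 ^ n)%N.
Local Notation r := (n - k)%N.
Local Notation code := (coop_code k lam).

Definition zc (j : 'I_l) (i : 'I_n) : F := lam i (bit i (j %% 2 ^ n)).

Lemma zc_inj j : injective (zc j).
Proof. by move=> i1 i2 e; have := @lam_inj (i1, _) (i2, _) e; case. Qed.

Lemma codeP c : code c <-> forall t, (t < r)%N -> forall j : 'I_l, \sum_i zc j i ^+ t * c i j = 0.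
Proof.
split.
  by move=> /forallP h t ht j; move/forallP: (h (Ordinal ht)) => /(_ j) /eqP.
by move=> h; apply/forallP => t; apply/forallP => j; apply/eqP; apply: h.
Qed.

Lemma code_sub c d : code c -> code d -> code (c - d).
Proof.
move=> /codeP hc /codeP hd; apply/codeP => t ht j.
under eq_bigr do rewrite !mxE mulrBr.
by rewrite sumrB hc // hd // subrr.
Qed.

Lemma mds_uniq (S : {set 'I_n}) c d : #|S| = k -> code c -> code d ->
  (forall i, i \in S -> row i c = row i d) -> c = d.
Proof.
move=> cS /codeP hc /codeP hd e; apply/matrixP => i j; apply/eqP; rewrite -subr_eq0; apply/eqP.
apply: (@lagrange_zero F _ (zc j) (fun i => c i j - d i j) (~: S) r (@zc_inj j)) => //.
- move=> p; rewrite in_setC negbK => /e /(congr1 (fun m : 'rV_l => m 0 j)).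
  by rewrite !mxE => ->; rewrite subrr.
- by rewrite cardsCs setCK card_ord cS.
- move=> t ht; under eq_bigr do rewrite mulrBr.
  by rewrite sumrB hc // hd // subrr.
Qed.

Lemma code_exists (K : {set 'I_n}) (x : 'I_n -> 'I_l -> F) : #|K| = k ->
  exists c, code c /\ forall i j, i \in K -> c i j = x i j.
Proof.
move=> cK.
have : forall j : 'I_l, exists w : 'I_n -> F, (forall i, i \notin ~: K -> w i = 0) /\
  forall t, (t < #|~: K|)%N -> \sum_i zc j i ^+ t * w i = - \sum_(i in K) zc j i ^+ t * x i j.
  by move=> j; apply: vander_exists_set; apply: zc_inj.
case/fin_all_exists => W hW.
exists (\matrix_(i, j) ((if i \in K then x i j else 0) + W j i)); split.
  apply/codeP => t ht j.
  under eq_bigr do rewrite mxE mulrDr.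
  rewrite big_split /= (proj2 (hW j)); last by rewrite cardsCs setCK card_ord cK.
  rewrite [X in _ - X]big_mkcond -sumrB /=; apply: big1 => i _.
  by case: (i \in K); rewrite ?mulr0 ?subrr // subr0.
move=> i j iK; by rewrite mxE iK (proj1 (hW j)) ?addr0 // in_setC iK.
Qed.

Definition parity (c : 'M[F]_(n,l)) : 'M[F]_(r,l) :=
  \matrix_(t < r, j < l) \sum_i zc j i ^+ t * c i j.
Lemma parity_is_linear : linear parity.
Proof.
move=> a c d; apply/matrixP => t j; rewrite !mxE.
rewrite mulr_sumr -big_split /=; apply: eq_bigr => i _; rewrite !mxE; ring.
Qed.
HB.instance Definition _ := GRing.isLinear.Build F 'M[F]_(n,l) 'M[F]_(r,l) _ parity parity_is_linear.

Lemma parity_onto (Y : 'M[F]_(r,l)) : exists c, parity c = Y.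
Proof.
have hr : (r <= n)%N by apply: leq_subr.
pose J := [set widen_ord hr t | t : 'I_r].
have cJ : #|J| = r by rewrite card_imset ?card_ord //; by move=> a b /(congr1 val) /= /val_inj.
have : forall j : 'I_l, exists w : 'I_n -> F, (forall i, i \notin J -> w i = 0) /\
  forall t, (t < #|J|)%N -> \sum_i zc j i ^+ t * w i = oapp (fun s : 'I_r => Y s j) 0 (insub t).
  by move=> j; apply: vander_exists_set; apply: zc_inj.
case/fin_all_exists => W hW.
exists (\matrix_(i, j) W j i); apply/matrixP => t j; rewrite mxE.
under eq_bigr do rewrite mxE.
by rewrite (proj2 (hW j)) ?cJ // valK.
Qed.

Lemma code_dim : linear_code_of_dim (k * l) code.
Proof.
exists (lker (linfun parity)); split.
  move=> c; rewrite memv_ker lfunE /=; apply/idP/idP.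
    move/eqP => e; apply/codeP => t ht j.
    by have := congr1 (fun m : 'M_(r,l) => m (Ordinal ht) j) e; rewrite !mxE.
  by move/codeP => h; apply/eqP/matrixP => t j; rewrite !mxE h.
have := limg_ker_dim (linfun parity) fullv; rewrite capfv.
have -> : (linfun parity @: fullv)%VS = fullv.
  apply/vspaceP => y; rewrite memvf; apply/memv_imgP.
  by have [c ec] := parity_onto y; exists c; rewrite ?memvf // lfunE.
rewrite !dimvf /= => e; apply/eqP; rewrite -(eqn_add2r (r * l)) e -mulnDl subnKC //.
exact: ltnW.
Qed.

Lemma code_MDS : MDS_array_code k code.
Proof.
split; first exact: code_dim.
by move=> S cS c d hc hd; apply: mds_uniq.
Qed.

Lemma pair_zero (R : {set 'I_n}) (w : 'I_n) c (j1 j2 : 'I_l) :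
  code c -> #|R| = k.+1 -> w \notin R ->
  (forall i, i != w -> bit i (j1 %% 2 ^ n) = bit i (j2 %% 2 ^ n)) ->
  bit w (j1 %% 2 ^ n) != bit w (j2 %% 2 ^ n) ->
  (forall i, i \in R -> c i j1 + c i j2 = 0) ->
  (forall i, i != w -> c i j1 + c i j2 = 0) /\ c w j1 = 0 /\ c w j2 = 0.
Proof.
move=> /codeP hc cR wR hb hw hR.
set a1 := (j1 %% 2 ^ n)%N in hb hw *; set a2 := (j2 %% 2 ^ n)%N in hb hw *.
pose W (p : 'I_n * bool) := (if bit p.1 a1 == p.2 then c p.1 j1 else 0) +
                            (if bit p.1 a2 == p.2 then c p.1 j2 else 0).
pose J := [set (i, bit i a1) | i : 'I_n in ~: R] :|: [set (w, bit w a2)].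
have cJ : (#|J| <= r)%N.
  apply: leq_trans (leq_card_setU _ _) _; rewrite cards1 card_imset; last first.
    by move=> i1 i2 [].
  rewrite cardsCs setCK card_ord cR.
  have : (#|R| <= n)%N by rewrite -[X in (_ <= X)%N]card_ord max_card.
  rewrite cR => h; lia.
have W0 : forall p, W p = 0.
  apply: (@lagrange_zero F _ (fun p : 'I_n * bool => lam p.1 p.2) W J r lam_inj) => //.
    move=> [i x]; rewrite in_setU in_set1 negb_or => /andP [hJ hw'].
    rewrite /W /=; case: (boolP (i \in R)) => iR.
      have iw : i != w by apply: contraNneq wR => <-.
      by rewrite -(hb i iw); case: eqP => _; [exact: hR | rewrite addr0].
    have xn : bit i a1 != x.
      by apply: contraNneq hJ => <-; apply/imsetP; exists i; rewrite ?in_setC.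
    rewrite (negbTE xn) add0r; case: eqP => // e.
    case: (eqVneq i w) => [iw|iw]; last by move: xn; rewrite (hb i iw) e eqxx.
    by move: hw'; rewrite -iw -e eqxx.
  move=> t ht.
  rewrite -(pair_big xpredT xpredT (fun i x => lam i x ^+ t * W (i, x))) /=.
  transitivity (\sum_i zc j1 i ^+ t * c i j1 + \sum_i zc j2 i ^+ t * c i j2).
    rewrite -big_split /=; apply: eq_bigr => i _.
    rewrite big_bool /W /zc /= -/a1 -/a2.
    by case: (bit i a1); case: (bit i a2) => /=; ring.
  by rewrite !hc // addr0.
split.
  move=> i iw; have := W0 (i, bit i a1); rewrite /W /= eqxx (hb i iw) eqxx.
  by [].
split.
  have := W0 (w, bit w a1); rewrite /W /= eqxx eq_sym (negbTE hw) addr0.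
  by [].
have := W0 (w, bit w a2); rewrite /W /= eqxx (negbTE hw) add0r.
by [].
Qed.
End Code.


Section Cols.
Variable n : nat.
Local Notation l := (3 * 2 ^ n)%N.
Lemma lpos : (0 < l)%N. Proof. by rewrite muln_gt0 expn_gt0. Qed.
Definition col (b a : nat) : 'I_l := Ordinal (@ltn_pmod (b * 2 ^ n + a) l lpos).

Lemma col_val b a : (b < 3)%N -> (a < 2 ^ n)%N -> col b a = (b * 2 ^ n + a)%N :> nat.
Proof.
move=> hb ha; rewrite /= modn_small //.
have : (b * 2 ^ n + a < b.+1 * 2 ^ n)%N by rewrite mulSn addnC ltn_add2r.
move/leq_trans; apply; rewrite leq_mul2r hb orbT //.
Qed.

Lemma col_mod b a : (b < 3)%N -> (a < 2 ^ n)%N -> (col b a %% 2 ^ n)%N = a.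
Proof. by move=> hb ha; rewrite col_val // modnMDl modn_small. Qed.

Lemma col_div b a : (b < 3)%N -> (a < 2 ^ n)%N -> (col b a %/ 2 ^ n)%N = b.
Proof. by move=> hb ha; rewrite col_val // divnMDl ?expn_gt0 // divn_small // addn0. Qed.

Lemma col_eta (j : 'I_l) : j = col (j %/ 2 ^ n) (j %% 2 ^ n) /\ (j %/ 2 ^ n < 3)%N /\ (j %% 2 ^ n < 2 ^ n)%N.
Proof.
have h1 : (j %/ 2 ^ n < 3)%N by rewrite ltn_divLR ?expn_gt0.
have h2 : (j %% 2 ^ n < 2 ^ n)%N by rewrite ltn_mod expn_gt0.
by split => //; apply: ord_inj; rewrite col_val // -divn_eq.
Qed.

Definition pU (u : nat) (m : nat) : 'I_l * 'I_l :=
  if bit u m then (col 1 (m - 2 ^ u), col 1 m) else (col 0 m, col 0 (m + 2 ^ u)).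
Definition pV (u v : nat) (m : nat) : 'I_l * 'I_l :=
  let b := if bit u m then 0%N else 1%N in
  if bit v m then (col b (m - 2 ^ v), col 2 m) else (col 2 m, col b (m + 2 ^ v)).
Definition pairsU u := map (pU u) (iota 0 (2 ^ n)).
Definition pairsV u v := map (pV u v) (iota 0 (2 ^ n)).

Lemma size_pairsU u : size (pairsU u) = (2 ^ n)%N.
Proof. by rewrite size_map size_iota. Qed.
Lemma size_pairsV u v : size (pairsV u v) = (2 ^ n)%N.
Proof. by rewrite size_map size_iota. Qed.

Definition PairsOK (ps : seq ('I_l * 'I_l)) (w : 'I_n) :=
  forall p, p \in ps -> (forall i : 'I_n, i != w -> bit i (p.1 %% 2 ^ n) = bit i (p.2 %% 2 ^ n)) /\
                        bit w (p.1 %% 2 ^ n) != bit w (p.2 %% 2 ^ n).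

Lemma pairsU_ok (w : 'I_n) : PairsOK (pairsU w) w.
Proof.
move=> p /mapP [m]; rewrite mem_iota add0n => hm ->; rewrite /pU.
case: (boolP (bit w m)) => hb /=.
  have [h1 h2] := bitB w hb.
  have hm' : (m - 2 ^ w < 2 ^ n)%N by apply: leq_ltn_trans (leq_subr _ _) hm.
  rewrite !col_mod //; split; last by rewrite (bitB w hb).2 eqxx hb.
  by move=> i iw; have iw' : (i : nat) != w := iw; rewrite (bitB i hb).2 iw'.
have hw : bit w m = false by apply/negbTE.
have hm' := bitD_lt (ltn_ord w) hm hw.
rewrite !col_mod //; split; last by rewrite bitD // eqxx hw.
by move=> i iw; have iw' : (i : nat) != w := iw; rewrite bitD // (negbTE iw').
Qed.

Lemma pairsV_ok (u v : 'I_n) : PairsOK (pairsV u v) v.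
Proof.
move=> p /mapP [m]; rewrite mem_iota add0n => hm ->; rewrite /pV.
set b := if bit u m then 0%N else 1%N.
have hb3 : (b < 3)%N by rewrite /b; case: (bit u m).
case: (boolP (bit v m)) => hb /=.
  have hm' : (m - 2 ^ v < 2 ^ n)%N by apply: leq_ltn_trans (leq_subr _ _) hm.
  rewrite !col_mod //; split; last by rewrite (bitB v hb).2 eqxx hb.
  by move=> i iw; have iw' : (i : nat) != v := iw; rewrite (bitB i hb).2 iw'.
have hw : bit v m = false by apply/negbTE.
have hm' := bitD_lt (ltn_ord v) hm hw.
rewrite !col_mod //; split; last by rewrite bitD // eqxx hw.
by move=> i iw; have iw' : (i : nat) != v := iw; rewrite bitD // (negbTE iw').
Qed.
End Cols.

Lemma pU_in n u m : (m < 2 ^ n)%N -> pU n u m \in pairsU n u.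
Proof. by move=> hm; apply: map_f; rewrite mem_iota add0n. Qed.
Lemma pV_in n u v m : (m < 2 ^ n)%N -> pV n u v m \in pairsV n u v.
Proof. by move=> hm; apply: map_f; rewrite mem_iota add0n. Qed.

Section Rec.
Variables (F : finFieldType) (n k : nat) (lam : 'I_n -> bool -> F).
Hypothesis lam_inj : injective (fun p : 'I_n * bool => lam p.1 p.2).
Hypothesis hkn : (k < n)%N.
Variables (u v : 'I_n) (R : {set 'I_n}).
Hypotheses (uv : u != v) (uR : u \notin R) (vR : v \notin R) (cR : #|R| = k.+1).
Local Notation code := (coop_code k lam).
Local Notation l := (3 * 2 ^ n)%N.

Lemma pz (w : 'I_n) ps (d : 'M[F]_(n, l)) : PairsOK ps w -> w \notin R -> code d ->
  (forall j, j \in R -> forall p, p \in ps -> d j p.1 + d j p.2 = 0) ->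
  forall p, p \in ps -> (forall i, i != w -> d i p.1 + d i p.2 = 0) /\ d w p.1 = 0 /\ d w p.2 = 0.
Proof.
move=> ok wR hd h p hp; have [h1 h2] := ok p hp.
by apply: (@pair_zero F n k lam lam_inj hkn R w) => // j jR; exact: h j jR p hp.
Qed.

Lemma msgU (d : 'M[F]_(n, l)) : code d ->
  (forall j, j \in R -> forall p, p \in pairsV n u v -> d j p.1 + d j p.2 = 0) ->
  forall p, p \in pairsV n u v -> d u p.1 + d u p.2 = 0.
Proof. by move=> hd h p hp; apply: ((pz (@pairsV_ok n u v) vR hd h hp).1 u uv). Qed.

Lemma msgV (d : 'M[F]_(n, l)) : code d ->
  (forall j, j \in R -> forall p, p \in pairsU n u -> d j p.1 + d j p.2 = 0) ->
  forall p, p \in pairsU n u -> d v p.1 + d v p.2 = 0.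
Proof. by move=> hd h p hp; apply: ((pz (@pairsU_ok n u) uR hd h hp).1 v); rewrite eq_sym. Qed.

Lemma recU (d : 'M[F]_(n, l)) : code d ->
  (forall j, j \in R -> forall p, p \in pairsU n u -> d j p.1 + d j p.2 = 0) ->
  (forall p, p \in pairsV n u v -> d u p.1 + d u p.2 = 0) ->
  forall j, d u j = 0.
Proof.
move=> hd h hm.
have G := pz (@pairsU_ok n u) uR hd h.
have st1 : forall b a, (b < 2)%N -> (a < 2 ^ n)%N -> d u (col n b a) = 0.
  move=> [|[|//]] a _ ha.
  - case: (boolP (bit u a)) => hb.
      have [h1 h2] := bitB u hb.
      have hb' : bit u (a - 2 ^ u) = false by rewrite h2 eqxx.
      have hm' : (a - 2 ^ u < 2 ^ n)%N by apply: leq_ltn_trans (leq_subr _ _) ha.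
      have := (G _ (@pU_in n u _ hm')).2.2; rewrite /pU hb' /= subnK //.
    have := (G _ (@pU_in n u _ ha)).2.1; rewrite /pU (negbTE hb) //.
  - case: (boolP (bit u a)) => hb.
      have := (G _ (@pU_in n u _ ha)).2.2; rewrite /pU hb //.
    have hb0 : bit u a = false by apply/negbTE.
    have hm' := bitD_lt (ltn_ord u) ha hb0.
    have hb' : bit u (a + 2 ^ u) by rewrite bitD // eqxx.
    have := (G _ (@pU_in n u _ hm')).2.1; rewrite /pU hb' /= addnK //.
have st2 : forall a, (a < 2 ^ n)%N -> d u (col n 2 a) = 0.
  move=> a ha; have := hm _ (@pV_in n u v _ ha); rewrite /pV.
  case: (boolP (bit v a)) => hb /=.
    have hm' : (a - 2 ^ v < 2 ^ n)%N by apply: leq_ltn_trans (leq_subr _ _) ha.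
    by rewrite (st1 (if bit u a then 0 else 1)%N (a - 2 ^ v)%N) ?add0r //; case: (bit u a).
  have hm' := bitD_lt (ltn_ord v) ha (negbTE hb).
  by rewrite (st1 (if bit u a then 0 else 1)%N (a + 2 ^ v)%N) ?addr0 //; case: (bit u a).
move=> j; have [ej [h1 h2]] := col_eta j; rewrite ej.
move: (j %/ 2 ^ n)%N (j %% 2 ^ n)%N h1 h2 => b a h1 h2.
have : [|| b == 0, b == 1 | b == 2]%N by move: h1; case: b => [|[|[|]]].
by case/or3P => /eqP ->; [apply: st1 | apply: st1 | apply: st2].
Qed.

Lemma recV (d : 'M[F]_(n, l)) : code d ->
  (forall j, j \in R -> forall p, p \in pairsV n u v -> d j p.1 + d j p.2 = 0) ->
  (forall p, p \in pairsU n u -> d v p.1 + d v p.2 = 0) ->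
  forall j, d v j = 0.
Proof.
move=> hd h hm.
have G := pz (@pairsV_ok n u v) vR hd h.
have uv' : (u : nat) != v := uv.
have vu' : (v : nat) != u by rewrite eq_sym.
have st1 : forall a, (a < 2 ^ n)%N -> d v (col n 2 a) = 0.
  move=> a ha; have := G _ (@pV_in n u v _ ha); rewrite /pV.
  by case: (bit v a) => /= [[_ [_ ->]]|[_ [->]]].
have st2 : forall a, (a < 2 ^ n)%N -> d v (col n (if bit u a then 0 else 1) a) = 0.
  move=> a ha; case: (boolP (bit v a)) => hb.
    have [h1 h2] := bitB v hb.
    have hb' : bit v (a - 2 ^ v) = false by rewrite h2 eqxx.
    have hu : bit u (a - 2 ^ v) = bit u a by rewrite (bitB u hb).2 uv'.
    have hm' : (a - 2 ^ v < 2 ^ n)%N by apply: leq_ltn_trans (leq_subr _ _) ha.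
    have := (G _ (@pV_in n u v _ hm')).2.2; rewrite /pV hb' hu /= subnK //.
  have hb0 : bit v a = false by apply/negbTE.
  have hm' := bitD_lt (ltn_ord v) ha hb0.
  have hb' : bit v (a + 2 ^ v) by rewrite bitD // eqxx.
  have hu : bit u (a + 2 ^ v) = bit u a by rewrite bitD // (negbTE uv').
  have := (G _ (@pV_in n u v _ hm')).2.1; rewrite /pV hb' hu /= addnK //.
have st3 : forall b a, (b < 2)%N -> (a < 2 ^ n)%N -> d v (col n b a) = 0.
  move=> b a hb2 ha.
  case: (boolP (b == if bit u a then 0%N else 1%N)) => [/eqP ->|hne]; first exact: st2.
  move: hb2 hne; case: b => [|[|//]] _; case: (boolP (bit u a)) => hb //= _.
    have hb0 : bit u a = false by apply/negbTE.
    have hm' := bitD_lt (ltn_ord u) ha hb0.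
    have hb' : bit u (a + 2 ^ u) by rewrite bitD // eqxx.
    have := hm _ (@pU_in n u _ ha); rewrite /pU hb0 /=.
    by have := st2 _ hm'; rewrite hb' => ->; rewrite addr0.
  have [h1 h2] := bitB u hb.
  have hb' : bit u (a - 2 ^ u) = false by rewrite h2 eqxx.
  have hm' : (a - 2 ^ u < 2 ^ n)%N by apply: leq_ltn_trans (leq_subr _ _) ha.
  have := hm _ (@pU_in n u _ ha); rewrite /pU hb /=.
  by have := st2 _ hm'; rewrite hb' => ->; rewrite add0r.
move=> j; have [ej [h1 h2]] := col_eta j; rewrite ej.
move: (j %/ 2 ^ n)%N (j %% 2 ^ n)%N h1 h2 => b a h1 h2.
have : [|| b == 0, b == 1 | b == 2]%N by move: h1; case: b => [|[|[|]]].
by case/or3P => /eqP ->; [apply: st3 | apply: st3 | apply: st1].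
Qed.
End Rec.


Lemma map_eq_sub (F : zmodType) (T : eqType) (ps : seq (T * T)) (f g : T -> F) :
  [seq f p.1 + f p.2 | p <- ps] = [seq g p.1 + g p.2 | p <- ps] ->
  forall p, p \in ps -> (f p.1 - g p.1) + (f p.2 - g p.2) = 0.
Proof.
by move/eq_in_map => h p hp; rewrite addrACA -opprD (h p hp) subrr.
Qed.

Lemma map_sub_eq (F : zmodType) (T : eqType) (ps : seq (T * T)) (f g : T -> F) :
  (forall p, p \in ps -> (f p.1 - g p.1) + (f p.2 - g p.2) = 0) ->
  [seq f p.1 + f p.2 | p <- ps] = [seq g p.1 + g p.2 | p <- ps].
Proof.
move=> h; apply/eq_in_map => p hp; apply/eqP; rewrite -subr_eq0 opprD addrACA.
by apply/eqP; apply: h.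
Qed.

Section Scheme.
Variables (F : finFieldType) (n k : nat) (lam : 'I_n -> bool -> F).
Hypothesis lam_inj : injective (fun p : 'I_n * bool => lam p.1 p.2).
Hypothesis hkn : (k < n)%N.
Variables (u v : 'I_n) (Fs R : {set 'I_n}).
Hypotheses (uv : u != v) (uR : u \notin R) (vR : v \notin R) (cR : #|R| = k.+1).
Hypothesis eFs : Fs = [set u; v].
Local Notation code := (coop_code k lam).
Local Notation l := (3 * 2 ^ n)%N.

Definition pairs_of (i : 'I_n) := if i == v then pairsV n u v else pairsU n u.
Definition dlf (j i : 'I_n) (x : 'rV[F]_l) : seq F := [seq x 0 p.1 + x 0 p.2 | p <- pairs_of i].
Definition dlv (c : 'M[F]_(n, l)) (i : 'I_n) : 'I_n -> seq F :=
  fun j => if j \in R then dlf j i (row j c) else [::].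
Definition exf (i' i : 'I_n) (D : 'I_n -> seq F) : seq F :=
  let c' := odflt 0 [pick c' : 'M[F]_(n, l) | code c' && [forall j, D j == dlv c' i' j]] in
  [seq c' i p.1 + c' i p.2 | p <- pairs_of i'].
Definition recvf (c : 'M[F]_(n, l)) (i : 'I_n) : 'I_n -> seq F :=
  fun i' => if (i' \in Fs) && (i' != i) then exf i' i (dlv c i') else [::].
Definition recf (i : 'I_n) (D E : 'I_n -> seq F) : 'rV[F]_l :=
  row i (odflt 0 [pick c' : 'M[F]_(n, l) | [&& code c', [forall j, D j == dlv c' i j]
                                                 & [forall i', E i' == recvf c' i i']]]).
Definition scheme : coop_scheme F n l :=
  CoopScheme (fun _ _ => 2 ^ n)%N dlf (fun _ _ => 2 ^ n)%N exf recf.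

Lemma size_pairs_of i : size (pairs_of i) = (2 ^ n)%N.
Proof. by rewrite /pairs_of; case: eqP => _; rewrite ?size_pairsU ?size_pairsV. Qed.

Lemma dl_eq (c d : 'M[F]_(n, l)) i : (forall j, dlv c i j = dlv d i j) ->
  forall j, j \in R -> forall p, p \in pairs_of i -> (c - d) j p.1 + (c - d) j p.2 = 0.
Proof.
move=> h j jR p hp; have := h j; rewrite /dlv jR /dlf => e.
by have := map_eq_sub e hp; rewrite !mxE.
Qed.

Lemma msg_ok (i' i : 'I_n) (c d : 'M[F]_(n, l)) : code c -> code d ->
  ((i' == v) && (i == u)) || ((i' == u) && (i == v)) ->
  (forall j, j \in R -> forall p, p \in pairs_of i' -> (c - d) j p.1 + (c - d) j p.2 = 0) ->
  [seq c i p.1 + c i p.2 | p <- pairs_of i'] = [seq d i p.1 + d i p.2 | p <- pairs_of i'].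
Proof.
move=> hc hd hi h; apply: map_sub_eq => p hp.
have hcd := code_sub hc hd.
case/orP: hi => /andP [/eqP ei /eqP ej]; subst i' i.
  move: h hp; rewrite /pairs_of eqxx => h hp.
  by have := msgU lam_inj hkn uv vR cR hcd h hp; rewrite !mxE.
move: h hp; rewrite /pairs_of (negbTE uv) => h hp.
by have := msgV lam_inj hkn uv uR cR hcd h hp; rewrite !mxE.
Qed.

Lemma exf_val (i' i : 'I_n) (c : 'M[F]_(n, l)) : code c ->
  ((i' == v) && (i == u)) || ((i' == u) && (i == v)) ->
  exf i' i (dlv c i') = [seq c i p.1 + c i p.2 | p <- pairs_of i'].
Proof.
move=> hc hi; rewrite /exf; case: pickP => [c1 /andP [hc1 /forallP h1] | hn] /=; last first.
  by have := hn c; rewrite hc /=; move/negbT/negP; case; apply/forallP => j.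
apply: msg_ok => //; apply: dl_eq => j; exact/esym/eqP/h1.
Qed.

Lemma scheme_valid : valid_coop_scheme code Fs R scheme.
Proof.
split; first by move=> i j x; rewrite /= /dlf size_map size_pairs_of.
split; first by move=> i' i D; rewrite /= /exf size_map size_pairs_of.
move=> c hc i iF; rewrite /= /recf.
case: pickP => [c2 /and3P [hc2 /forallP hD /forallP hE] | hn] /=; last first.
  have := hn c; rewrite hc /=; move/negbT; rewrite negb_and => /orP [] /negP []; by apply/forallP.
have hD' : forall j, dlv c i j = dlv c2 i j by move=> j; apply/eqP/hD.
have hE' : forall i', recvf c i i' = recvf c2 i i' by move=> i'; apply/eqP/hE.
have hcd := code_sub hc hc2.
apply/rowP => j; rewrite !mxE; apply/eqP; rewrite eq_sym -subr_eq0; apply/eqP.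
move: iF; rewrite eFs !inE => /orP [] /eqP ei; subst i.
- have h1 := dl_eq hD'; rewrite /pairs_of (negbTE uv) in h1.
  have := hE' v; rewrite /recvf eFs !inE eqxx orbT eq_sym uv /=.
  rewrite !exf_val ?eqxx // => /map_eq_sub h2.
  suff: (c - c2) u j = 0 by rewrite !mxE.
  have H := recU lam_inj hkn uR cR hcd h1; apply: (H v) => p hp.
  move: h2; rewrite /pairs_of eqxx => h2.
  by have := h2 p hp; rewrite !mxE.
- have h1 := dl_eq hD'; rewrite /pairs_of eqxx in h1.
  have := hE' u; rewrite /recvf eFs !inE eqxx /= uv /=.
  rewrite !exf_val ?eqxx ?orbT // => /map_eq_sub h2.
  suff: (c - c2) v j = 0 by rewrite !mxE.
  have H := recV lam_inj hkn uv vR cR hcd h1; apply: H => p hp.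
  move: h2; rewrite /pairs_of (negbTE uv) => h2.
  by have := h2 p hp; rewrite !mxE.
Qed.

Lemma scheme_bw : coop_bandwidth Fs R scheme = (2 * (k + 2) * 2 ^ n)%N.
Proof.
rewrite /coop_bandwidth /=.
under eq_bigr do rewrite sum_nat_const.
under [X in (_ + X)%N]eq_bigr => i _ do rewrite sum_nat_const.
rewrite sum_nat_const eFs cards2 uv /= cR.
rewrite (eq_bigr (fun _ => 2 ^ n)%N).
  by rewrite sum_nat_const cards2 uv /=; ring.
move=> i iF.
have -> : #|(fun i0 : 'I_n => (i0 \in [set u; v]) && (i0 != i))| = #|[set u; v] :\ i|.
  by apply: eq_card => x; rewrite in_setD1 andbC.
have := cardsD1 i [set u; v]; rewrite iF cards2 uv /= => e.
have -> : #|[set u; v] :\ i| = 1%N by move: e; rewrite add1n => -[e1]; rewrite -e1.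
by rewrite mul1n.
Qed.
End Scheme.

Local Close Scope ring_scope.


Lemma sumD1_all (T : finType) (R : {set T}) (f : T -> nat) :
  (\sum_(a in R) \sum_(b in R :\ a) f b = (#|R| - 1) * \sum_(a in R) f a)%N.
Proof.
have e : (\sum_(a in R) (\sum_(b in R :\ a) f b + f a) = #|R| * \sum_(a in R) f a)%N.
  rewrite -sum_nat_const; apply: eq_bigr => a aR; rewrite (big_setD1 a aR) /= addnC //.
move: e; rewrite big_split /= mulnBl mul1n => e.
by rewrite -e addnK.
Qed.

Lemma card_setD1 (T : finType) (R : {set T}) a : a \in R -> #|R :\ a| = (#|R| - 1)%N.
Proof. by move=> aR; rewrite (cardsD1 a R) aR add1n subn1. Qed.

Lemma pair_sum (T : finType) (R : {set T}) (f : T -> nat) (c : nat) :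
  (\sum_(a in R) \sum_(b in R :\ a) (f a + f b + c) =
   2 * (#|R| - 1) * \sum_(a in R) f a + #|R| * (#|R| - 1) * c)%N.
Proof.
transitivity (\sum_(a in R) ((#|R| - 1) * f a + \sum_(b in R :\ a) f b + (#|R| - 1) * c))%N.
  apply: eq_bigr => a aR; rewrite !big_split /= !sum_nat_const card_setD1 //.
rewrite !big_split /= sumD1_all -!big_distrr /= sum_nat_const.
ring.
Qed.

Lemma triple_sum (T : finType) (R : {set T}) (f : T -> nat) :
  (\sum_(a in R) \sum_(b in R :\ a) \sum_(c in R :\ a :\ b) (f a + f b + f c) =
   3 * (#|R| - 1) * (#|R| - 2) * \sum_(a in R) f a)%N.
Proof.
transitivity (\sum_(a in R) ((#|R| - 1) * (#|R| - 2) * f a + 2 * (#|R| - 2) * \sum_(b in R :\ a) f b))%N.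
  apply: eq_bigr => a aR.
  transitivity (\sum_(b in R :\ a) ((#|R| - 2) * f a + (#|R| - 2) * f b + \sum_(c in R :\ a :\ b) f c))%N.
    apply: eq_bigr => b bR; rewrite !big_split /= !sum_nat_const !card_setD1 // -!subnDA addn1 //.
  rewrite !big_split /= sumD1_all sum_nat_const -!big_distrr /= card_setD1 // -subnDA addn1.
  ring.
rewrite big_split /= -!big_distrr /= sumD1_all.
case: (#|R|) => [|[|m]] /=; rewrite ?subnn ?muln0 ?mul0n //=; ring.
Qed.

Local Open Scope ring_scope.

Lemma card_seq_inj (F : finType) (X : finType) (phi : X -> seq F) m :
  (forall x, size (phi x) = m) -> injective phi -> (#|X| <= #|F| ^ m)%N.
Proof.
move=> hs hi.
pose psi (x : X) : m.-tuple F := Tuple (introT eqP (hs x)).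
have : injective psi by move=> x y /(congr1 val) /= /hi.
by move/leq_card; rewrite card_tuple.
Qed.

Lemma arith1 k : (k.+1 - 1 - 1 - 1 = k - 2)%N. Proof. lia. Qed.
Lemma arith2 k : (2 <= k)%N -> (1 + (1 + (k - 2)) = k)%N. Proof. lia. Qed.

Lemma final_arith k X G l : (1 <= k)%N -> (2 * (k+1) * l <= 2 * X + (k+1) * G)%N ->
  ((2 <= k)%N -> (2 * (k+1) * l <= 3 * X)%N) ->
  (2 * (k + 2) * l <= 3 * (X + G))%N.
Proof.
move=> hk h1 h2.
case: (ltnP k 2) => hk2.
  have e : k = 1%N by lia.
  subst k; lia.
have := h2 hk2 => {}h2.
have h1' : (3 * (2 * (k+1) * l) <= 3 * (2 * X + (k+1) * G))%N by rewrite leq_mul2l h1 orbT.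
have h2' : ((k-1) * (2 * (k+1) * l) <= (k-1) * (3 * X))%N by rewrite leq_mul2l h2 orbT.
rewrite -(@leq_pmul2l (k+1)) ?addn1 //.
nia.
Qed.

Lemma sum2 (T : finType) (u v : T) (f : T -> nat) : u != v ->
  (\sum_(i in [set u; v]) f i = f u + f v)%N.
Proof. by move=> uv; rewrite big_setU1 ?inE // big_set1. Qed.

Lemma sum2x (T : finType) (u v : T) (g : T -> T -> nat) : u != v ->
  (\sum_(i in [set u; v]) \sum_(i' in [set u; v] | i' != i) g i' i = g v u + g u v)%N.
Proof.
move=> uv; rewrite sum2 // !big_mkcondr /= !sum2 // eqxx eq_sym uv /=.
by rewrite eqxx add0n addn0 addnC.
Qed.

Section LB.
Variables (F : finFieldType) (n k : nat) (lam : 'I_n -> bool -> F).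
Hypothesis lam_inj : injective (fun p : 'I_n * bool => lam p.1 p.2).
Hypothesis q1 : (1 < #|F|)%N.
Variables (Fs R : {set 'I_n}).
Local Notation code := (coop_code k lam).
Local Notation l := (3 * 2 ^ n)%N.
Variable S : coop_scheme F n l.
Hypothesis HS : valid_coop_scheme code Fs R S.

Lemma dn_eq c1 c2 i : (forall j, j \in R -> dl S j i (row j c1) = dl S j i (row j c2)) ->
  downloaded S R c1 i = downloaded S R c2 i.
Proof. by move=> h; apply: functional_extensionality => j; rewrite /downloaded; case: ifP => // /h. Qed.

Lemma rec_eq c1 c2 i : code c1 -> code c2 -> i \in Fs ->
  downloaded S R c1 i = downloaded S R c2 i ->
  (forall i', i' \in Fs -> i' != i -> ex S i' i (downloaded S R c1 i') = ex S i' i (downloaded S R c2 i')) ->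
  row i c1 = row i c2.
Proof.
move=> h1 h2 iF hd he.
have [_ [_ H]] := HS.
rewrite -(H c1 h1 i iF) -(H c2 h2 i iF) hd; congr (rec S i _ _).
apply: functional_extensionality => i'; rewrite /received.
by case: (boolP (i' \in Fs)) => //= i'F; case: eqP => //= /eqP ne; apply: he.
Qed.

Lemma sz_dl j i x : size (dl S j i x) = dl_size S j i.
Proof. by have [h _] := HS; apply: h. Qed.
Lemma sz_ex i' i D : size (ex S i' i D) = ex_size S i' i.
Proof. by have [_ [h _]] := HS; apply: h. Qed.

Lemma cut1 (i i' a b : 'I_n) : #|R| = k.+1 -> (1 <= k)%N -> i \in Fs -> i \notin R ->
  (forall i'', i'' \in Fs -> i'' != i -> i'' = i') ->
  a \in R -> b \in R -> a != b ->
  (l <= dl_size S a i + dl_size S b i + ex_size S i' i)%N.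
Proof.
move=> cR hk iF iR hi' aR bR ab.
pose T := R :\ a :\ b.
have bRa : b \in R :\ a by rewrite in_setD1 eq_sym ab.
have cT : #|T| = (k - 1)%N by rewrite card_setD1 // card_setD1 // cR; lia.
pose K := i |: T.
have iT : i \notin T by rewrite !in_setD1 (negbTE iR) !andbF.
have cK : #|K| = k by rewrite cardsU1 iT cT; lia.
pose xf (x : 'rV[F]_l) (i0 : 'I_n) (j : 'I_l) := if i0 == i then x 0 j else 0.
have : forall x : 'rV[F]_l, exists c, code c /\ forall i0 j, i0 \in K -> c i0 j = xf x i0 j.
  by move=> x; apply: (code_exists lam_inj).
case/fin_all_exists => C hC.
have rowi : forall x, row i (C x) = x.
  by move=> x; apply/rowP => j; rewrite mxE (proj2 (hC x)) ?setU11 // /xf eqxx.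
have rowT : forall x j, j \in T -> row j (C x) = 0.
  move=> x j jT; apply/rowP => jj; rewrite !mxE (proj2 (hC x)) ?in_setU1 ?jT ?orbT //.
  by rewrite /xf; case: eqP => // e; move: iT; rewrite -e jT.
pose phi x := dl S a i (row a (C x)) ++ dl S b i (row b (C x)) ++ ex S i' i (downloaded S R (C x) i').
have hs : forall x, size (phi x) = (dl_size S a i + dl_size S b i + ex_size S i' i)%N.
  by move=> x; rewrite !size_cat !sz_dl sz_ex addnA.
have hinj : injective phi.
  move=> x y /eqP; rewrite /phi eqseq_cat ?sz_dl // eqseq_cat ?sz_dl // => /and3P [/eqP e1 /eqP e2 /eqP e3].
  rewrite -(rowi x) -(rowi y); apply: rec_eq => //; try exact: (proj1 (hC _)).
    apply: dn_eq => j jR; case: (eqVneq j a) => [-> //|ja]; case: (eqVneq j b) => [-> //|jb].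
    by rewrite !rowT // !in_setD1 ja jb jR.
  by move=> i'' i''F ne; rewrite (hi' i'' i''F ne).
have := card_seq_inj hs hinj; rewrite card_mx mul1n leq_exp2l //.
Qed.

Lemma cut2 (u v a b c : 'I_n) : #|R| = k.+1 -> (2 <= k)%N -> Fs = [set u; v] -> u != v ->
  u \notin R -> v \notin R ->
  a \in R -> b \in R -> c \in R -> a != b -> a != c -> b != c ->
  (2 * l <= dl_size S a u + dl_size S b u + dl_size S c u +
            (dl_size S a v + dl_size S b v + dl_size S c v))%N.
Proof.
move=> cR hk eFs uv uR vR aR bR cRR ab ac bc.
pose T := R :\ a :\ b :\ c.
have bRa : b \in R :\ a by rewrite in_setD1 eq_sym ab.
have cRab : c \in R :\ a :\ b by rewrite !in_setD1 eq_sym bc eq_sym ac.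
have cT : #|T| = (k - 2)%N by rewrite card_setD1 // card_setD1 // card_setD1 // cR arith1.
pose K := u |: (v |: T).
have uT : u \notin T by rewrite !in_setD1 (negbTE uR) !andbF.
have vT : v \notin T by rewrite !in_setD1 (negbTE vR) !andbF.
have uvT : u \notin v |: T by rewrite in_setU1 negb_or uv uT.
have cK : #|K| = k by rewrite cardsU1 uvT cardsU1 vT cT /= arith2.
pose xf (x : 'rV[F]_l * 'rV[F]_l) (i0 : 'I_n) (j : 'I_l) :=
  if i0 == u then x.1 0 j else if i0 == v then x.2 0 j else 0.
have : forall x : 'rV[F]_l * 'rV[F]_l, exists c, code c /\ forall i0 j, i0 \in K -> c i0 j = xf x i0 j.
  by move=> x; apply: (code_exists lam_inj).
case/fin_all_exists => C hC.
have rowu : forall x, row u (C x) = x.1.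
  by move=> x; apply/rowP => j; rewrite mxE (proj2 (hC x)) ?setU11 // /xf eqxx.
have rowv : forall x, row v (C x) = x.2.
  move=> x; apply/rowP => j; rewrite mxE (proj2 (hC x)) ?in_setU1 ?eqxx ?orbT //.
  by rewrite /xf eq_sym (negbTE uv) eqxx.
have rowT : forall x j, j \in T -> row j (C x) = 0.
  move=> x j jT; apply/rowP => jj; rewrite !mxE (proj2 (hC x)) ?in_setU1 ?jT ?orbT //.
  rewrite /xf; case: eqP => [e|_]; first by move: uT; rewrite -e jT.
  by case: eqP => // e; move: vT; rewrite -e jT.
pose phi x := dl S a u (row a (C x)) ++ dl S b u (row b (C x)) ++ dl S c u (row c (C x)) ++
              dl S a v (row a (C x)) ++ dl S b v (row b (C x)) ++ dl S c v (row c (C x)).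
have hs : forall x, size (phi x) = (dl_size S a u + dl_size S b u + dl_size S c u +
            (dl_size S a v + dl_size S b v + dl_size S c v))%N.
  by move=> x; rewrite !size_cat !sz_dl !addnA.
have hdn : forall x y (i : 'I_n), dl S a i (row a (C x)) = dl S a i (row a (C y)) ->
    dl S b i (row b (C x)) = dl S b i (row b (C y)) ->
    dl S c i (row c (C x)) = dl S c i (row c (C y)) ->
    downloaded S R (C x) i = downloaded S R (C y) i.
  move=> x y i e1 e2 e3; apply: dn_eq => j jR.
  case: (eqVneq j a) => [-> //|ja]; case: (eqVneq j b) => [-> //|jb].
  case: (eqVneq j c) => [-> //|jc].
  by rewrite !rowT // !in_setD1 ja jb jc jR.
have uF : u \in Fs by rewrite eFs !inE eqxx.
have vF : v \in Fs by rewrite eFs !inE eqxx orbT.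
have hc : forall x, code (C x) := fun x => proj1 (hC x).
have hinj : injective phi.
  move=> [x1 x2] [y1 y2] /eqP; rewrite /phi.
  do 5 (rewrite eqseq_cat; last by rewrite !sz_dl).
  move=> /andP [/eqP e1 /andP [/eqP e2 /andP [/eqP e3 /andP [/eqP e4 /andP [/eqP e5 /eqP e6]]]]].
  have du := hdn _ _ u e1 e2 e3; have dv := hdn _ _ v e4 e5 e6.
  congr (_, _).
    have := rowu (x1, x2); have := rowu (y1, y2); rewrite /= => <- <-.
    apply: rec_eq => // i'' i''F ne.
    have -> : i'' = v by move: i''F ne; rewrite eFs !inE => /orP [] /eqP -> //; rewrite eqxx.
    by rewrite dv.
  have := rowv (x1, x2); have := rowv (y1, y2); rewrite /= => <- <-.
  apply: rec_eq => // i'' i''F ne.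
  have -> : i'' = u by move: i''F ne; rewrite eFs !inE => /orP [] /eqP -> //; rewrite eqxx.
  by rewrite du.
by have := card_seq_inj hs hinj; rewrite card_prod card_mx mul1n -expnD leq_exp2l // addnn -muln2 mulnC.
Qed.

Lemma lower_bound (u v : 'I_n) : #|R| = k.+1 -> (1 <= k)%N -> Fs = [set u; v] -> u != v ->
  u \notin R -> v \notin R -> (2 * (k + 2) * 2 ^ n <= coop_bandwidth Fs R S)%N.
Proof.
move=> cR hk eFs uv uR vR.
have uF : u \in Fs by rewrite eFs !inE eqxx.
have vF : v \in Fs by rewrite eFs !inE eqxx orbT.
have hvu : forall i'', i'' \in Fs -> i'' != u -> i'' = v.
  by move=> i''; rewrite eFs !inE => /orP [] /eqP -> //; rewrite eqxx.
have huv : forall i'', i'' \in Fs -> i'' != v -> i'' = u.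
  by move=> i''; rewrite eFs !inE => /orP [] /eqP -> //; rewrite eqxx.
rewrite /coop_bandwidth eFs sum2 // sum2x //.
pose f := fun j => dl_size S j u; pose g := fun j => dl_size S j v.
pose Fu := (\sum_(a in R) f a)%N; pose Fv := (\sum_(a in R) g a)%N.
pose g1 := ex_size S v u; pose g2 := ex_size S u v.
change (2 * (k + 2) * 2 ^ n <= Fu + Fv + (g1 + g2))%N.
have cR1 : (#|R| - 1 = k)%N by rewrite cR subn1.
have cnt2 : (k.+1 * k * l = \sum_(a in R) \sum_(b in R :\ a) l)%N.
  under eq_bigr => a aR do rewrite sum_nat_const (card_setD1 aR) cR1.
  by rewrite sum_nat_const cR !mulnA.
have A : (k.+1 * k * l <= 2 * k * Fu + k.+1 * k * g1)%N.
  have e := pair_sum R f g1; rewrite cR1 cR in e; rewrite -e cnt2.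
  apply: leq_sum => a aR; apply: leq_sum => b; rewrite in_setD1 => /andP [ba bR].
  by apply: (cut1 cR hk uF uR hvu aR bR); rewrite eq_sym.
have B : (k.+1 * k * l <= 2 * k * Fv + k.+1 * k * g2)%N.
  have e := pair_sum R g g2; rewrite cR1 cR in e; rewrite -e cnt2.
  apply: leq_sum => a aR; apply: leq_sum => b; rewrite in_setD1 => /andP [ba bR].
  by apply: (cut1 cR hk vF vR huv aR bR); rewrite eq_sym.
have C : (2 <= k)%N -> (2 * (k + 1) * l <= 3 * (Fu + Fv))%N.
  move=> hk2.
  have cR2 : (#|R| - 2 = k - 1)%N by rewrite cR subSS subn1.
  have e := triple_sum R (fun j => f j + g j)%N; rewrite cR1 cR2 big_split /= in e.
  have cnt3 : (k.+1 * k * (k - 1) * (2 * l) =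
     \sum_(a in R) \sum_(b in R :\ a) \sum_(c in R :\ a :\ b) 2 * l)%N.
    under eq_bigr => a aR.
      under eq_bigr => b bR do rewrite sum_nat_const (card_setD1 bR) (card_setD1 aR) cR1 subn1.
      rewrite sum_nat_const (card_setD1 aR) cR1.
    over.
    by rewrite sum_nat_const cR subn1 /= !mulnA.
  have H : (k.+1 * k * (k - 1) * (2 * l) <= 3 * k * (k - 1) * (Fu + Fv))%N.
    rewrite -e cnt3.
    apply: leq_sum => a aR; apply: leq_sum => b; rewrite in_setD1 => /andP [ba bR].
    apply: leq_sum => c; rewrite !in_setD1 => /and3P [cb ca cR'].
    have := cut2 cR hk2 eFs uv uR vR aR bR cR' _ _ _.
    rewrite eq_sym ba eq_sym ca eq_sym cb => /(_ isT isT isT).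
    rewrite /f /g => h; apply: leq_trans h _; apply: eq_leq; ring.
  have kp : (0 < k * (k - 1))%N by rewrite muln_gt0; apply/andP; split; lia.
  rewrite -(@leq_pmul2l (k * (k - 1))) //.
  have e1 : (k * (k - 1) * (2 * (k + 1) * l) = k.+1 * k * (k - 1) * (2 * l))%N by ring.
  have e2 : (k * (k - 1) * (3 * (Fu + Fv)) = 3 * k * (k - 1) * (Fu + Fv))%N by ring.
  by rewrite e1 e2; exact: H.
have key : (2 * (k+1) * l <= 2 * (Fu + Fv) + (k+1) * (g1 + g2))%N.
  have kp : (0 < k)%N by lia.
  rewrite -(@leq_pmul2l k) //.
  have AB := leq_add A B.
  have e1 : (k * (2 * (k + 1) * l) = k.+1 * k * l + k.+1 * k * l)%N by ring.
  have e2 : (k * (2 * (Fu + Fv) + (k + 1) * (g1 + g2)) = 2 * k * Fu + k.+1 * k * g1 + (2 * k * Fv + k.+1 * k * g2))%N by ring.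
  by rewrite e1 e2.
have h := final_arith hk key C.
rewrite -(@leq_pmul2l 3) //.
have e1 : (3 * (2 * (k + 2) * 2 ^ n) = 2 * (k + 2) * l)%N by ring.
by rewrite e1.
Qed.
End LB.


Unset Implicit Arguments.

Theorem mainTheorem1 (F : finFieldType) (n k : nat) (lam : 'I_n -> bool -> F) :
  (1 <= k)%N -> (k < n)%N -> (2 * n <= #|F|)%N ->
  injective (fun p : 'I_n * bool => lam p.1 p.2) ->
  coop_MSR k 2 k.+1 (coop_code k lam) /\
  (forall Fs Rs : {set 'I_n}, #|Fs| = 2%N -> [disjoint Fs & Rs] -> #|Rs| = k.+1 ->
     is_N_co (coop_code k lam) Fs Rs (2 * (k + 2) * 2 ^ n)%N).
Proof.
move=> hk hkn hF lam_inj.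
have q1 : (1 < #|F|)%N by lia.
have main : forall Fs Rs : {set 'I_n}, #|Fs| = 2%N -> [disjoint Fs & Rs] -> #|Rs| = k.+1 ->
     is_N_co (coop_code k lam) Fs Rs (2 * (k + 2) * 2 ^ n)%N.
  move=> Fs Rs c2 dj cR.
  have /cards2P [u [v [uv eFs]]] : #|Fs| == 2%N by rewrite c2.
  have uR : u \notin Rs by rewrite (disjointFr dj) // eFs !inE eqxx.
  have vR : v \notin Rs by rewrite (disjointFr dj) // eFs !inE eqxx orbT.
  split.
    exists (scheme k lam u v Fs Rs); split.
      exact: scheme_valid.
    exact: scheme_bw.
  move=> S HS; exact: (lower_bound lam_inj q1 HS cR hk eFs uv uR vR).
split; last exact: main.
split; first exact: code_MDS.
move=> Fs Rs c2 dj cR; exists (2 * (k + 2) * 2 ^ n)%N; split; first exact: main.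
have -> : (2 + k.+1 - k = 3)%N by lia.
have -> : (k.+1 + 2 - 1 = k + 2)%N by lia.
ring.
Qed.
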